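(* Let $m\ge 2$ and let $\mathcal{R}_m^4$ be the rose graph with $N_m=3m+1$ nodes. For the NBCRW on $\mathcal{R}_m^4$, the stationary probability of the hub node, of any internal node, and of any peripheral node are respectively $$\pi_{\mathrm H}^{\mathrm B}=\frac{m}{2(m+\sqrt{2m-1})}=\frac{N_m-1}{2(N_m-1)+2\sqrt{6N_m-15}},\qquad \pi_{\mathrm I}^{\mathrm B}=\frac{1}{4m}=\frac{3}{4(N_m-1)},$$ $$\pi_{\mathrm P}^{\mathrm B}=\frac{m\sqrt{2m-1}-2m+1}{2m(m-1)^2}=\frac{3(N_m-1)\sqrt{6N_m-15}-18N_m+45}{2(N_m-1)(N_m-4)^2}.$$
   Context: The rose graph $\mathcal{R}_m^4$ ($m\ge2$) is obtained by gluing $m$ cycles of length 4 at a single common node, the hub. It has $3m+1$ nodes and $4m$ edges. In each 4-cycle (petal), the two neighbours of the hub are internal nodes and the node opposite the hub is the peripheral node. The non-backtracking matrix $\mathbf{B}$ of a graph is the matrix indexed by directed edges $i\to j$ (each undirected edge gives two directed edges), with $B_{i\to j,\,k\to l}=1$ if $j=k$ and $i\neq l$, and $0$ otherwise; $v=(v_{i\to j})$ is a non-negative eigenvector for its leading (Perron–Frobenius) eigenvalue, and the non-backtracking centrality of node $i$ is $x_i=\sum_{j\in\mathcal{N}_i}v_{i\to j}$. The non-backtracking centrality based random walk (NBCRW) is the Markov chain on nodes with transition probabilities $p_{ij}=a_{ij}x_j/\sum_k a_{ik}x_k$, $(a_{ij})$ the adjacency matrix; its stationary distribution is the probability vector $\pi$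 with $\pi\mathbf{P}=\pi$. *)

(* Defs.v *)
From HB Require Import structures.
From mathcomp Require Import all_boot all_order all_algebra.
From mathcomp Require Import complex.
Set Implicit Arguments. Unset Strict Implicit. Unset Printing Implicit Defensive.
Import Order.TTheory GRing.Theory Num.Theory.
Local Open Scope ring_scope.

Section Graph.
Variables (V : finType) (adj : rel V).

Definition dedge := {p : V * V | adj p.1 p.2}.

Definition nb_entry (e f : dedge) : nat :=
  (((val e).2 == (val f).1) && ((val e).1 != (val f).2)) : nat.

Variable R : rcfType.

Definition nb_eigenvalue (mu : R[i]) : Prop :=
  exists w : dedge -> R[i], (exists e, w e != 0) /\
    forall e, \sum_f (nb_entry e f)%:R * w f = mu * w e.

Definition nb_perron_vector (lam : R) (v : dedge -> R) : Prop :=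
  [/\ forall e, 0 <= v e,
      exists e, v e != 0,
      forall e, \sum_f (nb_entry e f)%:R * v f = lam * v e
    & forall mu : R[i], nb_eigenvalue mu -> `|mu| <= lam%:C]%C.

Definition nb_centrality (v : dedge -> R) (i : V) : R :=
  \sum_(e : dedge | (val e).1 == i) v e.

Definition nbcrw (x : V -> R) (i j : V) : R :=
  (adj i j)%:R * x j / \sum_k (adj i k)%:R * x k.

Definition stationary (P : V -> V -> R) (pi : V -> R) : Prop :=
  [/\ forall i, 0 <= pi i, \sum_i pi i = 1
    & forall j, \sum_i pi i * P i j = pi j].

End Graph.

(* Rose graph R_m^4: nodes are the hub (None) and, for each petal k < m,
   Some (k, 0) and Some (k, 2) (internal nodes, adjacent to the hub) and
   Some (k, 1) (peripheral node, opposite to the hub). *)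
Definition rose_node (m : nat) := option ('I_m * 'I_3).

Definition rose_adj (m : nat) : rel (rose_node m) := fun a b =>
  match a, b with
  | None, Some (_, t) => t != 1%N :> nat
  | Some (_, t), None => t != 1%N :> nat
  | Some (k, t), Some (k', t') =>
      (k == k') && ((((t == 1%N :> nat) && (t' != 1%N :> nat)))
                    || ((t != 1%N :> nat) && (t' == 1%N :> nat)))
  | None, None => false
  end.

Definition rose_hub (m : nat) : rose_node m := None.
Definition is_internal (m : nat) (a : rose_node m) : bool :=
  if a is Some (_, t) then t != 1%N :> nat else false.
Definition is_peripheral (m : nat) (a : rose_node m) : bool :=
  if a is Some (_, t) then t == 1%N :> nat else false.

(* Main.v *)
Require Import Defs.
From HB Require Import structures.
From mathcomp Require Import all_boot all_order all_algebra.
From mathcomp Require Import complex.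
From mathcomp Require Import ring lra.
Set Implicit Arguments. Unset Strict Implicit. Unset Printing Implicit Defensive.
Import Order.TTheory GRing.Theory Num.Theory.
Local Open Scope ring_scope.

Section Gen.
Variables (V : finType) (adj : rel V) (R : rcfType) (v : dedge adj -> R).

Definition ww (a b : V) : R :=
  if @insub _ (fun p : V * V => adj p.1 p.2) (dedge adj) (a, b) is Some e then v e else 0.

Lemma wwE (e : dedge adj) : v e = ww (val e).1 (val e).2.
Proof.
rewrite /ww; case: e => [[a b] h] /=.
by rewrite insubT.
Qed.

Lemma sum_dedge (F : V * V -> R) :
  \sum_(e : dedge adj) F (val e) = \sum_(p : V * V) (adj p.1 p.2)%:R * F p.
Proof.
transitivity (\sum_(p | adj p.1 p.2) F p); last first.
  rewrite big_mkcond; apply: eq_bigr => p _; case: ifP => _; by rewrite ?mul1r ?mul0r.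
rewrite (reindex_omap (val : dedge adj -> V * V) insub); last first.
  by move=> i Pi; rewrite insubT.
apply: eq_bigl => [[i iA]] /=.
by rewrite insubT /= iA eqxx.
Qed.

Lemma sum_option (T : finType) (F : option T -> R) :
  \sum_j F j = F None + \sum_t F (Some t).
Proof.
rewrite (bigD1 None) //=; congr (_ + _).
rewrite (reindex_omap (@Some T) (fun o => o)); last first.
  by move=> [t|].
by apply: eq_bigl => t; rewrite eqxx.
Qed.

Lemma sum_pair_fst (a : V) (G : V -> V -> R) :
  \sum_(p : V * V) (p.1 == a)%:R * G p.1 p.2 = \sum_b G a b.
Proof.
rewrite -(pair_bigA _ (fun i j => (i == a)%:R * G i j)) /=.
rewrite (bigD1 a) //= [X in _ + X]big1 ?addr0; last first.
  by move=> i ia; rewrite (negbTE ia); apply: big1 => j _; rewrite mul0r.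
by apply: eq_bigr => j _; rewrite eqxx mul1r.
Qed.

Lemma centE a : nb_centrality v a = \sum_b (adj a b)%:R * ww a b.
Proof.
rewrite /nb_centrality big_mkcond /=.
transitivity (\sum_(e : dedge adj)
   (fun p : V * V => (p.1 == a)%:R * ww p.1 p.2) (val e)).
  by apply: eq_bigr => e _ /=; rewrite -wwE; case: ifP => _; rewrite ?mul1r ?mul0r.
rewrite (sum_dedge (fun p : V * V => (p.1 == a)%:R * ww p.1 p.2)).
rewrite -(sum_pair_fst a (fun i j => (adj i j)%:R * ww i j)).
by apply: eq_bigr => p _ /=; rewrite mulrCA.
Qed.

Lemma eigE (lam : R) (heig : forall e, \sum_f (nb_entry e f)%:R * v f = lam * v e)
  a b (h : adj a b) :
  lam * ww a b = \sum_c (adj b c && (c != a))%:R * ww b c.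
Proof.
have := heig (exist _ (a, b) h); rewrite wwE /= => <-.
transitivity (\sum_(e : dedge adj)
   (fun p : V * V => (p.1 == b)%:R * (((a != p.2))%:R * ww p.1 p.2)) (val e)).
  apply: eq_bigr => e _ /=; rewrite -wwE /nb_entry /=.
  rewrite [b == _]eq_sym.
  by case: (_ == b); case: (a != _); rewrite /= ?mul1r ?mul0r.
rewrite (sum_dedge (fun p : V * V => (p.1 == b)%:R * (((a != p.2))%:R * ww p.1 p.2))).
rewrite -(sum_pair_fst b (fun i j => (adj i j && (j != a))%:R * ww i j)).
apply: eq_bigr => p _ /=.
rewrite [a == _]eq_sym.
by case: (adj p.1 p.2); case: (p.1 == b); case: (p.2 != a); rewrite /= ?mul1r ?mul0r ?mulr0.
Qed.
End Gen.

Section Sums.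
Variables (V : finType) (R : rcfType).
Lemma sum_eq1 (a : V) (F : V -> R) : \sum_c (c == a)%:R * F c = F a.
Proof.
rewrite (bigD1 a) //= eqxx mul1r big1 ?addr0 // => c ca.
by rewrite (negbTE ca) mul0r.
Qed.

Lemma sum_or2 (a b : V) (F : V -> R) : a != b ->
  \sum_c ((c == a) || (c == b))%:R * F c = F a + F b.
Proof.
move=> ab; rewrite (bigD1 a) //= eqxx mul1r (bigD1 b) 1?eq_sym //=.
rewrite eqxx orbT mul1r big1 ?addr0 // => c /andP[ca cb].
by rewrite (negbTE ca) (negbTE cb) mul0r.
Qed.

Lemma or_and_neq1 (a b c : V) : a != b ->
  ((c == a) || (c == b)) && (c != a) = (c == b).
Proof.
move=> ab; case: (c =P a) => [->|/eqP ca]; first by rewrite ?eqxx ?andbF ?(negbTE ab).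
by rewrite ?(negbTE ca) ?andbT.
Qed.

Lemma or_and_neq2 (a b c : V) : a != b ->
  ((c == a) || (c == b)) && (c != b) = (c == a).
Proof.
move=> ab; case: (c =P b) => [->|/eqP cb]; first by rewrite ?eqxx ?andbF eq_sym ?(negbTE ab).
by rewrite ?(negbTE cb) ?orbF ?andbT.
Qed.

Lemma sum_minus (P : pred V) (a : V) (F : V -> R) : P a ->
  \sum_c (P c && (c != a))%:R * F c = \sum_c (P c)%:R * F c - F a.
Proof.
move=> Pa; rewrite [in RHS](bigD1 a) //= (bigD1 a) //= eqxx andbF mul0r add0r Pa mul1r.
rewrite [F a + _]addrC addrK; apply: eq_bigr => c ->; by rewrite andbT.
Qed.
End Sums.

Section Rose.
Variable m : nat.
Notation V := (rose_node m).
Definition o0 : 'I_3 := @Ordinal 3 0 isT.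
Definition o1 : 'I_3 := @Ordinal 3 1 isT.
Definition o2 : 'I_3 := @Ordinal 3 2 isT.

Lemma adj_I (k : 'I_m) (t : 'I_3) : val t != 1%N ->
  forall c, rose_adj (Some (k, t)) c = (c == None) || (c == Some (k, o1)).
Proof.
move=> ht [[k' t']|] /=; last by rewrite ht.
rewrite (negbTE ht) /=.
apply/andP/eqP => [[/eqP <- /eqP h]|[-> ->]]; last by rewrite eqxx.
by congr (Some (_, _)); apply: val_inj.
Qed.

Lemma eqSome (a c : 'I_m) (b d : 'I_3) :
  (Some (a, b) == Some (c, d) :> V) = (a == c) && (val b == val d).
Proof. by []. Qed.

Lemma adj_P (k : 'I_m) c :
  rose_adj (Some (k, o1)) c = (c == Some (k, o0)) || (c == Some (k, o2)).
Proof.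
case: c => [[k' [[|[|[|n]]] Ht]]|] //; rewrite /= ?eqSome /= ?andbT ?andbF ?orbF //= eq_sym //.
Qed.

Lemma t_cases (t : 'I_3) : t = o0 \/ t = o1 \/ t = o2.
Proof.
case: t => [[|[|[|n]]] Ht]; [left|right;left|right;right|by []]; exact: val_inj.
Qed.

Lemma adj_sym (a b : V) : rose_adj a b = rose_adj b a.
Proof.
case: a => [[k t]|]; case: b => [[k' t']|] //=.
rewrite eq_sym; case: (k' == k) => //=.
by case: (val t == 1%N); case: (val t' == 1%N).
Qed.

Lemma sum_I3 (R : rcfType) (G : 'I_3 -> R) : \sum_t G t = G o0 + G o1 + G o2.
Proof.
rewrite !big_ord_recl big_ord0 addr0 addrA.
by congr (G _ + G _ + G _); apply: val_inj.
Qed.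

Lemma total_sum (R : rcfType) (F : V -> R) :
  \sum_c F c = F None + \sum_k (F (Some (k, o0)) + F (Some (k, o1)) + F (Some (k, o2))).
Proof.
rewrite sum_option; congr (_ + _).
transitivity (\sum_(p : 'I_m * 'I_3) F (Some (p.1, p.2))); first by apply: eq_bigr => [[k t]].
rewrite -(pair_bigA _ (fun k t => F (Some (k, t)))) /=.
by apply: eq_bigr => k _; rewrite sum_I3.
Qed.

Lemma hub_sum (R : rcfType) (F : V -> R) :
  \sum_c (rose_adj None c)%:R * F c = \sum_k (F (Some (k, o0)) + F (Some (k, o2))).
Proof.
rewrite total_sum /= mul0r add0r; apply: eq_bigr => k _.
by rewrite !mul1r mul0r addr0.
Qed.
End Rose.

Section Main.
Variables (m : nat) (R : rcfType) (lam : R) (v : dedge (@rose_adj m) -> R).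
Hypothesis heig : forall e, \sum_f (nb_entry e f)%:R * v f = lam * v e.

Definition SS : R := \sum_k (ww v None (Some (k, o0)) + ww v None (Some (k, o2))).

Lemma chain (k : 'I_m) (t t' : 'I_3) (ht : val t != 1%N)
  (hin : (Some (k, t) == Some (k, o0) :> rose_node m) || (Some (k, t) == Some (k, o2)))
  (hpart : forall c : rose_node m, ((c == Some (k, o0)) || (c == Some (k, o2))) && (c != Some (k, t))
       = (c == Some (k, t'))) :
  [/\ lam * ww v None (Some (k, t)) = ww v (Some (k, t)) (Some (k, o1)),
     lam * ww v (Some (k, t)) (Some (k, o1)) = ww v (Some (k, o1)) (Some (k, t')),
     lam * ww v (Some (k, o1)) (Some (k, t)) = ww v (Some (k, t)) None &
     lam * ww v (Some (k, t)) None = SS - ww v None (Some (k, t))].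
Proof.
split.
- rewrite (eigE heig (a := None) (b := Some (k, t))) //.
  under eq_bigr => c _ do rewrite adj_I // or_and_neq1 //.
  exact: sum_eq1.
- rewrite (eigE heig (a := Some (k, t)) (b := Some (k, o1))); last by rewrite adj_I // eqxx orbT.
  under eq_bigr => c _ do rewrite adj_P hpart.
  exact: sum_eq1.
- rewrite (eigE heig (a := Some (k, o1)) (b := Some (k, t))); last by rewrite adj_P.
  under eq_bigr => c _ do rewrite adj_I // or_and_neq2 //.
  exact: sum_eq1.
- rewrite (eigE heig (a := Some (k, t)) (b := None)); last by rewrite adj_I // eqxx.
  rewrite (sum_minus (P := rose_adj None)) //.
  by rewrite hub_sum.
Qed.
End Main.

Theorem theorem4 (R : rcfType) (m : nat) (hm : (2 <= m)%N)
  (lam : R) (v : dedge (@rose_adj m) -> R) (pi : rose_node m -> R) :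
  nb_perron_vector lam v ->
  stationary (nbcrw (@rose_adj m) (nb_centrality v)) pi ->
  let M : R := m%:R in
  let N : R := (3 * m + 1)%N%:R in
  [/\ pi (rose_hub m) = M / (2 * (M + Num.sqrt (2 * M - 1)))
        /\ M / (2 * (M + Num.sqrt (2 * M - 1)))
           = (N - 1) / (2 * (N - 1) + 2 * Num.sqrt (6 * N - 15)),
      forall a, is_internal a ->
        pi a = 1 / (4 * M) /\ 1 / (4 * M) = 3 / (4 * (N - 1))
    & forall a, is_peripheral a ->
        pi a = (M * Num.sqrt (2 * M - 1) - 2 * M + 1) / (2 * M * (M - 1) ^+ 2)
        /\ (M * Num.sqrt (2 * M - 1) - 2 * M + 1) / (2 * M * (M - 1) ^+ 2)
           = (3 * (N - 1) * Num.sqrt (6 * N - 15) - 18 * N + 45)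
             / (2 * (N - 1) * (N - 4) ^+ 2)].
Proof.
move=> [vge0 [e0 ve0] heig _] [_ pisum pistat] M N.
have wge0 : forall x y, 0 <= ww v x y.
  by move=> x y; rewrite /ww; case: insub => // e; exact: vge0.
pose a k t := ww v None (Some (k, t)).
have n02 : forall k : 'I_m, (Some (k, o0) : rose_node m) != Some (k, o2).
  by move=> k; rewrite eqSome eqxx.
have ch0 : forall k, _ := fun k => chain heig (k := k) (t := o0) (t' := o2) isT
   ltac:(by rewrite eqxx) (fun c => or_and_neq1 c (n02 k)).
have ch2 : forall k, _ := fun k => chain heig (k := k) (t := o2) (t' := o0) isT
   ltac:(by rewrite eqxx orbT) (fun c => or_and_neq2 c (n02 k)).
have edges : forall k, (ww v (Some (k, o0)) (Some (k, o1)) = lam * a k o0 /\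
   ww v (Some (k, o2)) (Some (k, o1)) = lam * a k o2 /\
   ww v (Some (k, o1)) (Some (k, o2)) = lam ^+ 2 * a k o0) /\
   (ww v (Some (k, o1)) (Some (k, o0)) = lam ^+ 2 * a k o2 /\
   ww v (Some (k, o2)) None = lam ^+ 3 * a k o0 /\
   ww v (Some (k, o0)) None = lam ^+ 3 * a k o2).
  move=> k; have [A1 A2 A3 A4] := ch0 k; have [B1 B2 B3 B4] := ch2 k.
  rewrite -B3 -A3 -A2 -B2 -A1 -B1 /a.
  by rewrite !exprS expr0 mulr1 !mulrA.
have rel4 : forall k, lam ^+ 4 * a k o0 + a k o2 = SS v /\ lam ^+ 4 * a k o2 + a k o0 = SS v.
  move=> k; have [A1 A2 A3 A4] := ch0 k; have [B1 B2 B3 B4] := ch2 k.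
  have [[E1 [E2 E3]] [E4 [E5 E6]]] := edges k.
  split.
    by rewrite -(subrK (a k o2) (SS v)) -B4 E5 /a exprS mulrA.
  by rewrite -(subrK (a k o0) (SS v)) -A4 E6 /a exprS mulrA.
have hS0 : SS v != 0.
  apply/negP => /eqP S0.
  have az : forall k, a k o0 = 0 /\ a k o2 = 0.
    move=> k; have := @psumr_eq0P _ _ _ _ (fun k _ => addr_ge0 (wge0 _ _) (wge0 _ _)) S0 k isT.
    by move/eqP; rewrite paddr_eq0 ?wge0 // => /andP[/eqP h0 /eqP h2].
  move: ve0; rewrite wwE; case: e0 => [[x y] hxy] /=.
  case: x hxy => [[k t]|] hxy; last first.
    case: y hxy => [[k' t']|] hxy //=.
    have [h0 h2] := az k'; rewrite /a in h0 h2.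
    by case: (t_cases t') => [->|[->|->]] in hxy *; rewrite ?h0 ?h2 ?eqxx.
  have {hxy} hxy : rose_adj (Some (k, t)) y := hxy.
  have [h0 h2] := az k; have [[E1 [E2 E3]] [E4 [E5 E6]]] := edges k.
  case: (t_cases t) => [->|[->|->]] in hxy *.
  - by rewrite adj_I // in hxy; case/orP: hxy => /eqP ->; rewrite ?E1 ?E6 ?h0 ?h2 mulr0 eqxx.
  - by rewrite adj_P in hxy; case/orP: hxy => /eqP ->; rewrite ?E3 ?E4 ?h0 ?h2 mulr0 eqxx.
  - by rewrite adj_I // in hxy; case/orP: hxy => /eqP ->; rewrite ?E2 ?E5 ?h0 ?h2 mulr0 eqxx.
have hM2 : 2 <= M by rewrite /M ler_nat.
have hsum : (lam ^+ 4 + 1) * SS v = 2 * M * SS v.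
  have per : forall k, (lam ^+ 4 + 1) * (a k o0 + a k o2) = 2 * SS v.
    move=> k; have [r1 r2] := rel4 k.
    transitivity ((lam ^+ 4 * a k o0 + a k o2) + (lam ^+ 4 * a k o2 + a k o0)); first ring.
    by rewrite r1 r2 mulr_natl mulr2n.
  rewrite {1}/SS mulr_sumr (eq_bigr _ (fun k _ => per k)) sumr_const card_ord.
  rewrite /M; ring.
have hl4 : lam ^+ 4 = 2 * M - 1.
  have := mulIf hS0 hsum => h; rewrite -h; ring.
have hM0 : M != 0 by rewrite /M pnatr_eq0 -lt0n ltnW.
have hl0 : lam != 0.
  apply/eqP => l0; move: hl4; rewrite l0 expr0n /= => /eqP; rewrite eq_sym subr_eq0.
  by move=> /eqP h; move: hM2; rewrite -h; lra.
pose c := SS v / (2 * M).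
have ac : forall k, a k o0 = c /\ a k o2 = c.
  move=> k; have [r1 r2] := rel4 k.
  have e02 : a k o0 = a k o2.
    have : (lam ^+ 4 - 1) * (a k o0 - a k o2) = 0.
      transitivity ((lam ^+ 4 * a k o0 + a k o2) - (lam ^+ 4 * a k o2 + a k o0)); first ring.
      by rewrite r1 r2 subrr.
    rewrite hl4 => /eqP; rewrite mulf_eq0 => /orP[|]; last by rewrite subr_eq0 => /eqP.
    by move=> /eqP h; move: hM2; lra.
  have ea : a k o0 = c.
    rewrite /c -r1 -e02 hl4; field.
    exact: hM0.
  by rewrite -e02 ea.
have h20 : (2 : R) != 0 by rewrite pnatr_eq0.
have hc0 : c != 0 by rewrite /c mulf_neq0 // invr_eq0 mulf_neq0.
have hSc : SS v = 2 * M * c by rewrite /c; field.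
have hI0 : forall k, a k o0 = c by move=> k; case: (ac k).
have hI2 : forall k, a k o2 = c by move=> k; case: (ac k).
pose x := nb_centrality v.
have xH : x None = 2 * M * c.
  rewrite /x centE hub_sum -hSc //.
have xIt : forall k t, t = o0 \/ t = o2 -> x (Some (k, t)) = lam ^+ 3 * c + lam * c.
  move=> k t ht; rewrite /x centE.
  have ht1 : val t != 1%N by case: ht => ->.
  under eq_bigr => b _ do rewrite adj_I //.
  rewrite sum_or2 //.
  have [[E1 [E2 E3]] [E4 [E5 E6]]] := edges k.
  by case: ht => ->; rewrite ?E1 ?E2 ?E5 ?E6 ?hI0 ?hI2.
have xP : forall k, x (Some (k, o1)) = 2 * lam ^+ 2 * c.
  move=> k; rewrite /x centE.
  under eq_bigr => b _ do rewrite adj_P.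
  rewrite sum_or2 //.
  have [[E1 [E2 E3]] [E4 [E5 E6]]] := edges k.
  rewrite E3 E4 hI0 hI2; ring.
pose D i := \sum_k (rose_adj i k)%:R * x k.
pose xI := lam ^+ 3 * c + lam * c.
have DH : D None = 2 * M * xI.
  rewrite /D hub_sum (eq_bigr (fun _ => xI + xI)); last first.
    by move=> k _; rewrite !xIt //; [right|left].
  by rewrite sumr_const card_ord /M; ring.
have DI : forall k t, t = o0 \/ t = o2 -> D (Some (k, t)) = 2 * M * c + 2 * lam ^+ 2 * c.
  move=> k t ht; rewrite /D.
  have ht1 : val t != 1%N by case: ht => ->.
  under eq_bigr => b _ do rewrite adj_I //.
  by rewrite sum_or2 // xH xP.
have DP : forall k, D (Some (k, o1)) = 2 * xI.
  move=> k; rewrite /D.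
  under eq_bigr => b _ do rewrite adj_P.
  by rewrite sum_or2 // !xIt; [rewrite /xI; ring|right|left].
have st : forall j, pi j = \sum_i (rose_adj j i)%:R * (pi i * x j / D i).
  move=> j; rewrite -pistat; apply: eq_bigr => i _.
  by rewrite /nbcrw adj_sym /D /x; ring.
have hl2 : 0 <= lam ^+ 2 := sqr_ge0 lam.
have hMs : M + lam ^+ 2 != 0 by apply: lt0r_neq0; lra.
have hl21 : lam ^+ 2 + 1 != 0 by apply: lt0r_neq0; lra.
have hxI : xI != 0.
  have -> : xI = lam * c * (lam ^+ 2 + 1) by rewrite /xI; ring.
  by rewrite mulf_neq0 // mulf_neq0.
pose h := pi None.
pose q := lam ^+ 2 / (M + lam ^+ 2).
have e1 : forall k t, t = o0 \/ t = o2 ->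
    pi (Some (k, t)) = h / (2 * M) + pi (Some (k, o1)) / 2.
  move=> k t ht; rewrite st.
  have ht1 : val t != 1%N by case: ht => ->.
  under eq_bigr => b _ do rewrite adj_I //.
  rewrite sum_or2 // DH DP xIt //; rewrite -/xI -/h; field.
  by rewrite hxI andbT.
have e3 : forall k, pi (Some (k, o1)) = q * (pi (Some (k, o0)) + pi (Some (k, o2))).
  move=> k; rewrite st.
  under eq_bigr => b _ do rewrite adj_P.
  rewrite sum_or2 // !DI ?xP /q; [|by right|by left].
  field.
  have -> : 2 * M * c + 2 * lam ^+ 2 * c = 2 * c * (M + lam ^+ 2) by ring.
  by rewrite hMs mulf_neq0 // mulf_neq0.
have q1 : 1 - q != 0.
  have -> : 1 - q = M / (M + lam ^+ 2) by rewrite /q; field.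
  by rewrite mulf_neq0 // invr_eq0.
pose i0v := h / (2 * M) / (1 - q).
have sol : forall k, [/\ pi (Some (k, o0)) = i0v, pi (Some (k, o2)) = i0v &
                        pi (Some (k, o1)) = 2 * q * i0v].
  move=> k; have E0 := e1 k o0 (or_introl erefl); have E2 := e1 k o2 (or_intror erefl).
  have E3 := e3 k.
  have eq02 : pi (Some (k, o0)) = pi (Some (k, o2)) by rewrite E0 E2.
  have Ep : pi (Some (k, o1)) = 2 * q * pi (Some (k, o0)) by rewrite E3 -eq02; ring.
  have Ei : pi (Some (k, o0)) = h / (2 * M) + q * pi (Some (k, o0)).
    by rewrite {1}E0 Ep; field.
  have T : pi (Some (k, o0)) - q * pi (Some (k, o0)) = h / (2 * M) by rewrite {1}Ei; ring.
  have Ei' : pi (Some (k, o0)) = i0v by rewrite /i0v -T; field.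
  by split; rewrite -?eq02 ?Ep Ei'.
have hh : h = (1 - q) / 2.
  have E : h * (2 / (1 - q)) = 1.
    transitivity (\sum_i pi i); last exact: pisum.
    rewrite total_sum -/h.
    rewrite (eq_bigr (fun _ => i0v + 2 * q * i0v + i0v)); last first.
      by move=> k _; case: (sol k) => -> -> ->.
    rewrite sumr_const card_ord /i0v -mulr_natr -/M.
    by field; rewrite q1 hM0.
  have X0 : 2 / (1 - q) != 0 by rewrite mulf_neq0 // invr_eq0.
  by apply: (mulIf X0); rewrite E; field.
have l4 : (lam ^+ 2) ^+ 2 = lam ^+ 4 by rewrite -exprM.
have hsq : Num.sqrt (2 * M - 1) = lam ^+ 2.
  by rewrite -hl4 -l4 sqrtr_sqr ger0_norm.
have hN : N = 3 * M + 1 by rewrite /N /M natrD natrM.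
have hsqN : Num.sqrt (6 * N - 15) = 3 * lam ^+ 2.
  have -> : 6 * N - 15 = (3 * lam ^+ 2) ^+ 2.
    by rewrite exprMn l4 hl4 hN; ring.
  by rewrite sqrtr_sqr ger0_norm // mulr_ge0.
have T1 : M * lam ^+ 2 - 2 * M + 1 = lam ^+ 2 * (M - lam ^+ 2).
  apply/eqP; rewrite -subr_eq0; apply/eqP.
  transitivity (lam ^+ 4 - (2 * M - 1)); first ring.
  by rewrite hl4 subrr.
have T2 : (M - 1) ^+ 2 = (M - lam ^+ 2) * (M + lam ^+ 2).
  apply/eqP; rewrite -subr_eq0; apply/eqP.
  transitivity (lam ^+ 4 - (2 * M - 1)); first ring.
  by rewrite hl4 subrr.
have hMl : M - lam ^+ 2 != 0.
  apply/eqP => E; move: T2; rewrite E mul0r => /eqP; rewrite sqrf_eq0 subr_eq0 => /eqP M1.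
  by move: hM2; rewrite M1; lra.
have hM1 : M - 1 != 0 by apply/eqP => E; move: hM2; lra.
have hN1 : 3 * M + 1 - 1 != 0.
  have -> : 3 * M + 1 - 1 = 3 * M by ring.
  by rewrite mulf_neq0 // pnatr_eq0.
have hN4 : 3 * M + 1 - 4 != 0.
  have -> : 3 * M + 1 - 4 = 3 * (M - 1) by ring.
  by rewrite mulf_neq0 // pnatr_eq0.
rewrite hsq hsqN hN; split.
- split; first by rewrite /rose_hub -/h hh /q; field.
  field; rewrite ?andbT.
  have -> : 2 * (3 * M + 1 - 1) + 2 * (3 * lam ^+ 2) = 6 * (M + lam ^+ 2) by ring.
  by rewrite mulf_neq0 // pnatr_eq0.
- move=> [[k t]|] //= ht; split; last first.
    field; rewrite ?hM0 ?hMs ?hMl ?hM1 ?hN1 ?hN4 //.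
  case: (t_cases t) => [E|[E|E]]; rewrite E in ht *.
  + case: (sol k) => -> _ _; rewrite /i0v hh /q; field; rewrite ?hM0 ?hMs ?hMl ?hM1 ?hN1 ?hN4 //.
  + by [].
  + case: (sol k) => _ -> _; rewrite /i0v hh /q; field; rewrite ?hM0 ?hMs ?hMl ?hM1 ?hN1 ?hN4 //.
- move=> [[k t]|] //= ht; split; last first.
    field; rewrite ?hM0 ?hMs ?hMl ?hM1 ?hN1 ?hN4 //.
  case: (t_cases t) => [E|[E|E]]; rewrite E in ht *; try by [].
  case: (sol k) => _ _ ->; rewrite /i0v hh /q T1 T2; field; rewrite ?hM0 ?hMs ?hMl ?hM1 ?hN1 ?hN4 //.
Qed.
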